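(* Let $m=2k+1$ with $k\in\mathbb{N}$ and $\beta\in[\frac{2k+3}{2},\frac{k+1+\sqrt{k^2+6k+5}}{2})$. Let $i\in\{1,\ldots,m-1\}$ and let $x$ lie in the $i$-th fixed digit interval $[\frac{(i-1)\beta+m-(i-1)}{\beta(\beta-1)},\frac{i+1}{\beta}]$. If $i\in\{1,\ldots,k\}$ then $T_{\beta,i}(x)<\frac{k\beta+m-k}{\beta(\beta-1)}$, and if $i\in\{k+1,\ldots,m-1\}$ then $T_{\beta,i}(x)>\frac{k+1}{\beta}$.
   Context: $T_{\beta,i}(x)=\beta x-i$. *)

(* Defs.v *)
From Stdlib Require Import Reals Lra Lia.
Open Scope R_scope.

Definition T (beta : R) (i : nat) (x : R) : R := beta * x - INR i.

(* Main.v *)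
Require Import Defs.
From Stdlib Require Import Reals Lra Lia.
Open Scope R_scope.

Theorem lemma3p5 (k : nat) (beta : R) (i : nat) (x : R) :
  let m := (2 * k + 1)%nat in
  (2 * INR k + 3) / 2 <= beta ->
  beta < (INR k + 1 + sqrt (INR k ^ 2 + 6 * INR k + 5)) / 2 ->
  (1 <= i <= m - 1)%nat ->
  ((INR i - 1) * beta + INR m - (INR i - 1)) / (beta * (beta - 1)) <= x ->
  x <= (INR i + 1) / beta ->
  ((i <= k)%nat -> T beta i x < (INR k * beta + INR m - INR k) / (beta * (beta - 1))) /\
  ((k + 1 <= i)%nat -> T beta i x > (INR k + 1) / beta).
Proof.
  intros m H1 H2 Hi Hx1 Hx2.
  unfold T.
  assert (HK : 0 <= INR k) by apply pos_INR.
  assert (Hm : INR m = 2 * INR k + 1).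
  { unfold m. rewrite plus_INR, mult_INR. simpl. lra. }
  rewrite Hm in *.
  set (K := INR k) in *. set (I := INR i) in *.
  assert (Hb : K + 3/2 <= beta) by lra.
  assert (Hs0 : 0 <= K ^ 2 + 6 * K + 5) by nra.
  set (s := sqrt (K ^ 2 + 6 * K + 5)) in *.
  assert (Hss : s * s = K ^ 2 + 6 * K + 5) by (apply sqrt_sqrt; exact Hs0).
  assert (Hs : 0 <= s) by apply sqrt_pos.
  assert (Hq : beta * beta - (K + 1) * beta - (K + 1) < 0).
  { assert (0 < 2 * beta - (K + 1)) by lra.
    assert (2 * beta - (K + 1) < s) by lra.
    nra. }
  assert (HD : 0 < beta * (beta - 1)) by nra.
  assert (Hbp : 0 < beta) by lra.
  set (D := beta * (beta - 1)) in *.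
  assert (Ex2 : (I + 1) / beta * beta = I + 1) by (field; lra).
  assert (Ex1 : ((I - 1) * beta + (2 * K + 1) - (I - 1)) / D * D
                = (I - 1) * beta + (2 * K + 1) - (I - 1)) by (field; lra).
  assert (Ex3 : (K * beta + (2 * K + 1) - K) / D * D = K * beta + (2 * K + 1) - K)
    by (field; lra).
  assert (Ex4 : (K + 1) / beta * beta = K + 1) by (field; lra).
  set (u := (I + 1) / beta) in *.
  set (v := ((I - 1) * beta + (2 * K + 1) - (I - 1)) / D) in *.
  set (w := (K * beta + (2 * K + 1) - K) / D) in *.
  set (z := (K + 1) / beta) in *.
  assert (Hbx : beta * x <= I + 1) by nra.
  assert (Hdx : (I - 1) * beta + (2 * K + 1) - (I - 1) <= x * D) by nra.
  split; intros Hik.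
  - assert (1 < w).
    { apply (Rmult_lt_reg_r D); [exact HD|]. rewrite Ex3. unfold D. nra. }
    lra.
  - assert (HI : K + 1 <= I).
    { unfold K, I. rewrite <- S_INR. apply le_INR. lia. }
    assert (Hb1 : 0 < beta - 1) by lra.
    assert (Ht : (beta * x - I) * (beta - 1) >= 2 * K + 2 - beta).
    { unfold D in Hdx. nra. }
    assert (Hz : z * beta = K + 1) by exact Ex4.
    assert ((2 * K + 2 - beta) * beta > (K + 1) * (beta - 1)) by nra.
    set (t := beta * x - I) in *.
    assert (t * D > z * D).
    { unfold D. assert (t * (beta - 1) * beta >= (2 * K + 2 - beta) * beta) by nra.
      assert (z * beta * (beta - 1) = (K + 1) * (beta - 1)) by (rewrite Hz; ring).
      nra. }
    apply Rlt_gt. apply (Rmult_lt_reg_r D); [exact HD|]. lra.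
Qed.
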